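(* Let $\Gamma$ be a layered graph with unique minimal vertex $*$. The following are equivalent: (i) $\Gamma$ is uniform. (ii) For any vertices $v,x,x'$ with $v\gtrdot x$ and $v\gtrdot x'$, there exist vertices $x_0,\dots,x_s$ and $y_1,\dots,y_s$ such that $x_0=x$, $x_s=x'$, $v\gtrdot x_i$ for all $0\le i\le s$, and $x_{i-1}\gtrdot y_i$ and $x_i\gtrdot y_i$ for all $1\le i\le s$. (iii) For any two vertex paths $(v_1,\dots,v_n)$ and $(w_1,\dots,w_n)$ with $v_1=w_1$ and $v_n=w_n=*$, there is a sequence of vertex paths $\pi_1,\dots,\pi_k$, each starting at $v_1$ and ending at $*$, with $\pi_1=(v_1,\dots,v_n)$, $\pi_k=(w_1,\dots,w_n)$, such that for $1\le i<k$ the paths $\pi_i$ and $\pi_{i+1}$ differ in at most one vertex.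
   Context: A layered graph is a finite directed graph $\Gamma=(V,E)$ with $V=\bigsqcup_{i=0}^{N}V_i$ such that every edge from $V_i$ goes to $V_{i-1}$; $V_{\ge k}=\bigsqcup_{i\ge k}V_i$, $S(v)=\{w:(v,w)\in E\}$, we write $v\gtrdot w$ for $(v,w)\in E$, every vertex outside $V_0$ has $S(v)\ne\emptyset$, and $V_0=\{*\}$. A vertex path is a sequence $(v_1,\dots,v_n)$ with $v_i\gtrdot v_{i+1}$. For $v\in V$, let $\sim_v$ be the equivalence relation on $S(v)$ that is the transitive closure of the relation $w\approx_v u$ iff $S(w)\cap S(u)\ne\emptyset$ (together with reflexivity). $\Gamma$ is uniform if for every $v\in V_{\ge2}$ all elements of $S(v)$ are $\sim_v$-equivalent. *)

(* Defs.v *)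
From mathcomp Require Import all_boot.
Set Implicit Arguments. Unset Strict Implicit. Unset Printing Implicit Defensive.

(* A layered graph: vertices form a finite type V, [rk v = i] means v \in V_i,
   [e v w] means v ⋗ w (edge (v,w)). *)
Definition layered (V : finType) (e : rel V) (rk : V -> nat) (star : V) : Prop :=
  [/\ (forall v w, e v w -> rk v = (rk w).+1),
      (forall v, 0 < rk v -> exists w, e v w)
    & (forall v, rk v = 0 <-> v = star)].

Definition approx (V : finType) (e : rel V) (v : V) : rel V :=
  fun w u => [&& e v w, e v u & [exists y, e w y && e u y]].

Definition simv (V : finType) (e : rel V) (v : V) : rel V :=
  connect (approx e v).

Definition uniform (V : finType) (e : rel V) (rk : V -> nat) : Prop :=
  forall v, 2 <= rk v -> forall w u, e v w -> e v u -> simv e v w u.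

Definition condII (V : finType) (e : rel V) : Prop :=
  forall v x x', e v x -> e v x' ->
    exists (s : nat) (xs ys : nat -> V),
      [/\ xs 0 = x, xs s = x',
          (forall i, i <= s -> e v (xs i))
        & (forall i, 1 <= i <= s -> e (xs i.-1) (ys i) /\ e (xs i) (ys i))].

Definition vpath_from_to (V : finType) (e : rel V) (a b : V) (p : seq V) : bool :=
  if p is x :: p' then [&& x == a, path e x p' & last x p' == b] else false.

Definition differ_le1 (V : finType) (p q : seq V) : bool :=
  (size p == size q) && (count (fun ab : V * V => ab.1 != ab.2) (zip p q) <= 1).

Definition condIII (V : finType) (e : rel V) (star : V) : Prop :=
  forall (v1 : V) (p q : seq V),
    size p = size q -> vpath_from_to e v1 star p -> vpath_from_to e v1 star q ->
    exists (k : nat) (pi : nat -> seq V),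
      [/\ 1 <= k, pi 1 = p, pi k = q,
          (forall i, 1 <= i <= k -> vpath_from_to e v1 star (pi i))
        & (forall i, 1 <= i < k -> differ_le1 (pi i) (pi i.+1))].

(* Main.v *)
Require Import Defs.
From mathcomp Require Import all_boot.
Set Implicit Arguments. Unset Strict Implicit. Unset Printing Implicit Defensive.

Lemma rk_path (V : finType) (e : rel V) (rk : V -> nat) (star : V) :
  layered e rk star -> forall x p, path e x p -> rk x = rk (last x p) + size p.
Proof.
case=> Hrk _ _ x p; elim: p x => [|y p IH] x /=; first by rewrite addn0.
by move/andP=> [exy hp]; rewrite (Hrk _ _ exy) (IH _ hp) addnS.
Qed.

Lemma ex_path (V : finType) (e : rel V) (rk : V -> nat) (star : V) :
  layered e rk star -> forall n x, rk x = n -> exists p, path e x p && (last x p == star).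
Proof.
case=> Hrk Hne Hst; elim=> [|n IH] x hx.
  by exists [::]; rewrite /=; apply/eqP; apply/Hst.
have [w hw] := Hne x ltac:(by rewrite hx).
have: rk w = n by have := Hrk _ _ hw; rewrite hx => -[].
case/IH => p /andP[hp hl]; exists (w :: p); by rewrite /= hw hp.
Qed.

Lemma vp_shape (V : finType) (e : rel V) (rk : V -> nat) (star : V) :
  layered e rk star -> forall v1 p, vpath_from_to e v1 star p ->
  exists p', [/\ p = v1 :: p', path e v1 p', last v1 p' = star & size p' = rk v1].
Proof.
move=> L v1 [|a p] //= /and3P[/eqP-> hp /eqP hl]; exists p; split => //.
have := rk_path L hp; rewrite hl; have [_ _ Hst] := L.
by rewrite (proj2 (Hst star) erefl).
Qed.

Lemma count_zip0 (V : finType) (star : V) : forall p q : seq V, size p = size q ->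
  count (fun ab : V * V => ab.1 != ab.2) (zip p q) = 0 ->
  forall j, nth star p j = nth star q j.
Proof.
elim=> [|a p IH] [|b q] //= [hs]; case: eqP => hab //= hc [|j] //=; exact: IH.
Qed.

Lemma differ_nth (V : finType) (star : V) : forall (p q : seq V) i j,
  differ_le1 p q -> i < j ->
  nth star p i = nth star q i \/ nth star p j = nth star q j.
Proof.
rewrite /differ_le1.
elim=> [|a p IH] [|b q] i j //=; first by left; rewrite !nth_nil.
case/andP => /eqP [hs]; case: (eqVneq a b) => [<-|hab] /=.
  rewrite add0n => hc hij.
  case: i hij => [|i] hij; first by left.
  case: j hij => [|j] //= hij; apply: IH => //; by rewrite hs eqxx hc.
rewrite add1n ltnS leqn0 => /eqP hc.
case: i => [|i] /=; last first.
  move=> hij; right; case: j hij => [|j] //= _; exact: (count_zip0 star hs hc).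
case: j => [|j] //= _; right; exact: (count_zip0 star hs hc).
Qed.

Lemma zip_self0 (V : finType) (p : seq V) :
  count (fun ab : V * V => ab.1 != ab.2) (zip p p) = 0.
Proof. by elim: p => //= a p ->; rewrite eqxx. Qed.

Inductive steps (V : finType) (e : rel V) (star v1 : V) : seq V -> seq V -> Prop :=
| st_refl p : vpath_from_to e v1 star p -> steps e star v1 p p
| st_step p q r : vpath_from_to e v1 star p -> differ_le1 p q ->
    steps e star v1 q r -> steps e star v1 p r.

Lemma steps_trans (V : finType) (e : rel V) (star v1 : V) p q r :
  steps e star v1 p q -> steps e star v1 q r -> steps e star v1 p r.
Proof.
elim=> // {}p {}q r' hp hd _ IH h; exact: st_step hp hd (IH h).
Qed.

Lemma steps_vp (V : finType) (e : rel V) (star v1 : V) p q :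
  steps e star v1 p q -> vpath_from_to e v1 star q.
Proof. by elim. Qed.

Lemma vp_lift (V : finType) (e : rel V) (star v1 x : V) p :
  e v1 x -> vpath_from_to e x star p -> vpath_from_to e v1 star (v1 :: p).
Proof.
move=> hx; case: p => //= a p /and3P[/eqP-> hp hl]; by rewrite eqxx /= hx hp hl.
Qed.

Lemma steps_lift (V : finType) (e : rel V) (star v1 x : V) p q :
  e v1 x -> steps e star x p q -> steps e star v1 (v1 :: p) (v1 :: q).
Proof.
move=> hx; elim=> [{}p hp|{}p {}q r hp hd _ IH].
  by apply: st_refl; exact: vp_lift hx hp.
apply: st_step (IH); first exact: vp_lift hx hp.
by move: hd; rewrite /differ_le1 /= eqxx.
Qed.

Lemma steps_condIII (V : finType) (e : rel V) (star v1 : V) p q :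
  steps e star v1 p q ->
    exists (k : nat) (pi : nat -> seq V),
      [/\ 1 <= k, pi 1 = p, pi k = q,
          (forall i, 1 <= i <= k -> vpath_from_to e v1 star (pi i))
        & (forall i, 1 <= i < k -> differ_le1 (pi i) (pi i.+1))].
Proof.
elim=> [{}p hp|{}p {}q r hp hd _ [k [pi [hk h1 hkq hv hdi]]]].
  exists 1, (fun _ => p); split => // i; by case/andP=> /leq_trans h /h; rewrite ltnn.
exists k.+1, (fun i => if i <= 1 then p else pi i.-1); split => //.
- by rewrite ltnNge hk.
- move=> [|[|i]] //= hi; exact: hv.
- move=> [|[|i]] //= hi; first by rewrite h1.
  by apply: hdi; rewrite /=.
Qed.

Lemma ii_steps (V : finType) (e : rel V) (rk : V -> nat) (star : V) :
  layered e rk star -> condII e -> forall n v1, rk v1 = n -> forall p q,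
  vpath_from_to e v1 star p -> vpath_from_to e v1 star q -> steps e star v1 p q.
Proof.
move=> L H2; have [Hrk Hne Hst] := L.
elim=> [|n IH] v1 hv p q hp hq.
  have [p' [-> _ _ hs]] := vp_shape L hp; have [q' [-> _ _ hs']] := vp_shape L hq.
  move: hs hs'; rewrite hv; case: p' => // _; case: q' => // _.
  by apply: st_refl; rewrite /= eqxx /=; apply/eqP/Hst.
have [[|x p''] [-> hp1 hl hs]] := vp_shape L hp; first by rewrite hv in hs.
have [[|x' q''] [-> hq1 hl' hs']] := vp_shape L hq; first by rewrite hv in hs'.
move: hp1 hq1 hl hl' => /= /andP[ex hp''] /andP[ex' hq''] hl hl'.
have [s [xs [ys [h0 hsx hxs hys]]]] := H2 _ _ _ ex ex'.
have rkx : forall y, e v1 y -> rk y = n.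
  by move=> y /Hrk; rewrite hv => -[].
suff C : forall i, i <= s -> forall t, vpath_from_to e (xs i) star t ->
   steps e star v1 [:: v1, x & p''] (v1 :: t).
  by apply: (C s (leqnn s)); rewrite hsx /= eqxx hq'' hl' eqxx.
elim=> [|i IHi] hi t ht.
  rewrite h0 in ht; apply: (steps_lift ex); apply: (IH x (rkx _ ex)) => //.
  by rewrite /= eqxx hp'' hl eqxx.
have [y1 y2] := hys i.+1 ltac:(by rewrite /=).
have [r /andP[hr hrl]] := ex_path L (erefl (rk (ys i.+1))).
have S1 := IHi (ltnW hi) (xs i :: ys i.+1 :: r) ltac:(by rewrite /= eqxx y1 hr hrl).
apply: (steps_trans S1).
apply: (st_step (q := [:: v1, xs i.+1, ys i.+1 & r])).
- by apply: (vp_lift (hxs i (ltnW hi))); rewrite /= eqxx y1 hr hrl.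
- by rewrite /differ_le1 /= !eqxx zip_self0 addn0 /=; case: (_ != _).
apply: (steps_lift (hxs i.+1 hi)).
apply: (IH _ (rkx _ (hxs i.+1 hi))) => //.
by rewrite /= eqxx y2 hr hrl.
Qed.

Lemma vp_nth12 (V : finType) (e : rel V) (rk : V -> nat) (star : V) :
  layered e rk star -> forall v t, 2 <= rk v -> vpath_from_to e v star t ->
  [/\ e v (nth star t 1), e (nth star t 1) (nth star t 2) & 2 < size t].
Proof.
move=> L v t h2 ht; have [[|b [|c t']] [-> hp _ hs]] := vp_shape L ht;
  try by rewrite -hs in h2.
by move: hp => /= /and3P[-> -> _].
Qed.

Theorem mainTheorem5 (V : finType) (e : rel V) (rk : V -> nat) (star : V) :
  layered e rk star ->
  [<-> uniform e rk; condII e; condIII e star].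
Proof.
move=> L; have [Hrk Hne Hst] := L; tfae.
- move=> HU v x x' ex ex'.
  case: (leqP 2 (rk v)) => h2.
    have /connectP [p hp hl] := HU v h2 x x' ex ex'.
    exists (size p), (fun i => nth x (x :: p) i),
      (fun i => odflt star [pick y | e (nth x (x :: p) i.-1) y && e (nth x (x :: p) i) y]).
    have hpa : forall i, i < size p -> approx e v (nth x (x :: p) i) (nth x (x :: p) i.+1).
      by move=> i hi; move/pathP: hp => /(_ x i hi).
    split => //.
    + by rewrite /= -last_nth.
    + move=> [|i] hi //=; by case/and3P: (hpa i hi).
    + move=> [|i] //= hi; case/and3P: (hpa i hi) => _ _ /existsP [y hy].
      by case: pickP => [z /andP[]|/(_ y)]; [|rewrite hy].
  have hx : x = star by apply/Hst; have := Hrk _ _ ex; move: h2; case: (rk v) => [|[|]] //= _ [].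
  have hx' : x' = star by apply/Hst; have := Hrk _ _ ex'; move: h2; case: (rk v) => [|[|]] //= _ [].
  exists 0, (fun _ => x), (fun _ => x); split => //; first by rewrite hx hx'.
  by move=> [|i] //.
- move=> H2 v1 p q _ hp hq.
  exact: steps_condIII (ii_steps L H2 (erefl (rk v1)) hp hq).
- move=> H3 v h2 x u ex eu.
  have [r0 /andP[hr0 hl0]] := ex_path L (erefl (rk x)).
  have [r1 /andP[hr1 hl1]] := ex_path L (erefl (rk u)).
  have vp0 : vpath_from_to e v star [:: v, x & r0] by rewrite /= eqxx ex hr0 hl0.
  have vp1 : vpath_from_to e v star [:: v, u & r1] by rewrite /= eqxx eu hr1 hl1.
  have [p' [hp' _ _ hs0]] := vp_shape L vp0.
  have [q' [hq' _ _ hs1]] := vp_shape L vp1.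
  have [k [pi [hk h1 hkq hv hd]]] := H3 v [:: v, x & r0] [:: v, u & r1] ltac:(by rewrite hp' hq' /= hs0 hs1) vp0 vp1.
  suff C : forall i, 1 <= i <= k -> simv e v x (nth star (pi i) 1).
    by have := C k; rewrite hk leqnn hkq; apply.
  elim=> [|[|i] IH] //= hi.
    by rewrite h1 /=; apply: connect0.
  have hi' : 0 < i.+1 <= k by rewrite /= ltnW.
  apply: connect_trans (IH hi') _.
  have [a1 a2 as1] := vp_nth12 L h2 (hv _ hi').
  have [b1 b2 bs1] := vp_nth12 L h2 (hv i.+2 hi).
  case: (differ_nth star (hd i.+1 ltac:(by rewrite /=)) (ltnSn 1)) => [->|h].
    exact: connect0.
  apply: connect1; rewrite /approx a1 b1 /=; apply/existsP; exists (nth star (pi i.+1) 2).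
  by rewrite a2 h b2.
Qed.
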